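(* Suppose $x\in\mathrm{Fix}_n(\sigma)^\circ$ for some integer $n\ge1$, and that $n$ is minimal with this property. If $f\in C(X)$, $m\in\mathbb{Z}$, $\mathrm{supp}(f)\subset\mathrm{Fix}_m(\sigma)$ and $n\nmid m$, then $f(x)=0$.
   Context: $X$ is a non-empty compact Hausdorff space, $\sigma:X\to X$ a homeomorphism, $C(X)$ the continuous complex functions on $X$. For $m\in\mathbb{Z}$, $\mathrm{Fix}_m(\sigma)=\{x\in X:\sigma^mx=x\}$; superscript $\circ$ denotes interior in $X$; $\mathrm{supp}(f)$ is the closure of $\{x:f(x)\ne0\}$. *)

(* Defs.v *)
From mathcomp Require Import all_boot all_order all_algebra.
From mathcomp Require Import all_classical all_reals all_analysis.
From mathcomp Require Export complex.
Set Implicit Arguments. Unset Strict Implicit. Unset Printing Implicit Defensive.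
Import Order.TTheory GRing.Theory Num.Theory.
Local Open Scope classical_set_scope.
Local Open Scope ring_scope.

(* Integer iterate sigma^m of a homeomorphism sigma with inverse sigmainv:
   sigma^n for m = n >= 0, and sigmainv^(n+1) for m = -(n+1). *)
Definition iterz (X : Type) (sigma sigmainv : X -> X) (m : int) : X -> X :=
  match m with
  | Posz n => iter n sigma
  | Negz n => iter n.+1 sigmainv
  end.

Definition Fix (X : Type) (sigma sigmainv : X -> X) (m : int) : set X :=
  [set x | iterz sigma sigmainv m x = x].

Definition supp (X : topologicalType) (R : realType) (f : X -> (R[i])^o) : set X :=
  closure [set x | f x != 0].

(* Main.v *)
Require Import Defs.
From mathcomp Require Import all_boot all_order all_algebra.
From mathcomp Require Import all_classical all_reals all_analysis.
From mathcomp Require Import complex.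
Import Order.TTheory GRing.Theory Num.Theory.
Local Open Scope classical_set_scope.
Local Open Scope ring_scope.

Lemma iter_mul_fix (T : Type) (g : T -> T) (a k : nat) (y : T) :
  iter a g y = y -> iter (k * a) g y = y.
Proof.
move=> h; elim: k => [|k IH] //=; by rewrite mulSn iterD IH h.
Qed.

Lemma iter_gcd_fix (T : Type) (g : T -> T) (a b : nat) (y : T) :
  (0 < a)%N -> iter a g y = y -> iter b g y = y -> iter (gcdn a b) g y = y.
Proof.
move=> a0 ha hb; case: (egcdnP b a0) => km kn E _.
have := @iter_mul_fix T g a km y ha; by rewrite E addnC iterD (@iter_mul_fix T g b kn y hb).
Qed.

Lemma iter_inv_cancel (T : Type) (s si : T -> T) (k : nat) (y : T) :
  cancel si s -> iter k s (iter k si y) = y.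
Proof.
move=> K; elim: k => [|k IH] //.
by rewrite iterSr iterS K.
Qed.

Theorem lemma2p1 (R : realType) (X : topologicalType)
  (hX_compact : compact [set: X]) (hX_hausdorff : hausdorff_space X)
  (sigma sigmainv : X -> X)
  (hsigma_cont : continuous sigma) (hsigmainv_cont : continuous sigmainv)
  (hsigmaK : cancel sigma sigmainv) (hsigmainvK : cancel sigmainv sigma)
  (x : X) (n : nat) (hn : (0 < n)%N)
  (hx : (Fix sigma sigmainv n%:Z)° x)
  (hmin : forall k : nat, (0 < k < n)%N -> ~ (Fix sigma sigmainv k%:Z)° x)
  (f : X -> (R[i])^o) (hf : continuous f) (m : int)
  (hsupp : supp f `<=` Fix sigma sigmainv m)
  (hndiv : ~~ (n%:Z %| m)%Z) :
  f x = 0.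
Proof.
apply/eqP; apply: contraNT hndiv => fx0.
rewrite dvdzE /=.
have hmfix : forall y, Fix sigma sigmainv m y -> iter `|m|%N sigma y = y.
  move=> y; rewrite /Fix /iterz /=; clear -hsigmainvK; case: m => [k|k] hy; first exact: hy.
  change (iter k.+1 sigmainv y = y) in hy; change (iter k.+1 sigma y = y).
  by rewrite -{1}hy iter_inv_cancel.
set d := gcdn n `|m|%N.
have d0 : (0 < d)%N by rewrite gcdn_gt0 hn.
have dn : (d %| n)%N by apply: dvdn_gcdl.
apply/negPn/negP => nm.
have dltn : (d < n)%N.
  rewrite ltn_neqAle dvdn_leq // andbT; apply: contra nm => /eqP <-.
  exact: dvdn_gcdr.
apply: (hmin d); first by rewrite d0 dltn.
have hnz : \forall y \near x, f y != 0.
  move: (hf x) => hfx; have := cvgr_neq0 (f x) hfx fx0; exact.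
rewrite /interior; near=> y.
have hy1 : Fix sigma sigmainv n%:Z y by near: y; exact: hx.
have hy2 : f y != 0 by near: y; exact: hnz.
have hy3 : Fix sigma sigmainv m y.
  by apply: hsupp; apply: subset_closure.
rewrite /Fix /iterz /=.
exact: iter_gcd_fix hn hy1 (hmfix _ hy3).
Unshelve. all: by end_near.
Qed.
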